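(* Given $F\in \mathcal{G}_{N}^{dif}(A)$ with coefficients $f_{u}^{i}$, the left substitutional inverse of $F$ (i.e. the series $G$ with $G\circ F=(z_{1},\ldots,z_{N})$) is the power series $G(z)$ with coefficients $g_{v}^{j}=\langle S_{\mathcal{L}}(Y_{v}^{j}),F\rangle$, where $S_{\mathcal{L}}=\mathbf{s}S_{\mathcal{H}}\mathbf{s}$ is the antipode of the left Lagrange Hopf algebra $\mathcal{L}^{N}$. The right substitutional inverse of $F$ (i.e. the series $H$ with $F\circ H=(z_{1},\ldots,z_{N})$) is the power series $H(z)$ with coefficients $h_{v}^{j}=\langle S_{\mathcal{R}}(Y_{v}^{j}),F\rangle$, where $S_{\mathcal{R}}=\mathbf{t}S_{\mathcal{H}}\mathbf{t}$ is the antipode of the right Lagrange Hopf algebra $\mathcal{R}^{N}$.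
   Context: Let $A$ be a non-commutative unital algebra and $z_{1},\ldots,z_{N}$ non-commuting variables commuting with elements of $A$; for a word $w=w(1)\cdots w(p)$ in the free monoid on $\langle N\rangle=\{1,\ldots,N\}$ put $z_{w}=z_{w(1)}\cdots z_{w(p)}$. $\mathcal{G}_{N}^{dif}(A)$ is the set of $N$-tuples $F=(F^{1},\ldots,F^{N})$ of formal power series $F^{j}(z)=z_{j}+\sum_{|u|\geq 2}f_{u}^{j}z_{u}$ with $f_{u}^{j}\in A$. For $F,G\in\mathcal{G}_{N}^{dif}(A)$, $F\circ G$ denotes substitution of $G^{j}$ for $z_{j}$ in each $F^{i}$; its coefficients are $(F\circ G)_{u}^{i}=\sum f_{w}^{i}g_{u|C_{1}}^{w(1)}\cdots g_{u|C_{q}}^{w(q)}$, summed over all colored interval (ordered) partitions $((C_{1},\ldots,C_{q}),w(1)\cdots w(q))$, $1\le q\le p$, of the colored set $([p],u(1)\cdots u(p))$ (with $f_{j}^{i}=\delta_{ij}$). $\mathcal{H}=\mathcal{H}^{N}$ is the incidence Hopf algebra of $N$-colored interval partitions: as an algebra it is free on generators $Y_{u}^{i}$ ($1\le i\le N$, $|u|\ge 2$), with $Y_{j}^{i}=\delta_{ij}1$, coproduct $\Delta(Y_{u}^{i})=\sum Y_{u|C_{1}}^{v(1)}\cdots Y_{u|C_{q}}^{v(q)}\otimes Y_{v}^{i}$ (sum over colored interval partitions $((C_{1},\ldots,C_{q}),v)$ of $([|u|],u)$), counit $\varepsilon(Y_{u}^{i})=0$ for $|u|\ge2$, and antipode $S_{\mathcal{H}}$.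 $\mathbf{s}$ is the algebra anti-automorphism of $\mathcal{H}$ with $\mathbf{s}(Y_{u}^{i})=Y_{u^{*}}^{i}$ ($u^{*}$ the reversed word), and $\mathbf{t}$ is the algebra anti-automorphism with $\mathbf{t}(Y_{u}^{i})=Y_{u}^{i}$. The left Lagrange Hopf algebra $\mathcal{L}^{N}$ is $\mathcal{H}^{N}$ with coproduct $\Delta^{op}$ and antipode $S_{\mathcal{H}}^{-1}=\mathbf{s}S_{\mathcal{H}}\mathbf{s}$; the right Lagrange Hopf algebra $\mathcal{R}^{N}$ is the $\mathbf{t}$-transformed Hopf algebra with antipode $\mathbf{t}S_{\mathcal{H}}\mathbf{t}$. The pairing $\langle\,,\rangle:\mathcal{L}^{N}\times\mathcal{G}_{N}^{dif}(A)\to A$ is the bilinear map determined by $\langle Y_{u_{1}}^{i_{1}}\cdots Y_{u_{q}}^{i_{q}},F\rangle=f_{u_{1}}^{i_{1}}\cdots f_{u_{q}}^{i_{q}}$ (and $\langle 1,F\rangle=1$); it satisfies $\langle Y_{u}^{i},F\circ G\rangle=m_{A}\langle\Delta^{op}(Y_{u}^{i}),F\otimes G\rangle$. *)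

(* Defs.v *)
From mathcomp Require Import all_boot all_order all_algebra.
Set Implicit Arguments. Unset Strict Implicit. Unset Printing Implicit Defensive.
Import GRing.Theory.
Local Open Scope ring_scope.

Section Lagrange.
Variable N : nat.

Definition word := seq 'I_N.

(* all ways to cut a word into nonempty consecutive blocks (u|C_1,...,u|C_q) *)
Fixpoint splits (u : word) : seq (seq word) :=
  match u with
  | [::] => [:: [::]]
  | x :: u' =>
      flatten [seq (match s with
                    | [::] => [:: [:: [:: x]]]
                    | b :: s' => [:: [:: x] :: b :: s'; (x :: b) :: s']
                    end) | s <- splits u']
  end.

Fixpoint colorings (q : nat) : seq word :=
  match q with
  | 0 => [:: [::]]
  | q'.+1 => [seq c :: w | c <- ord_enum N, w <- colorings q']
  end.

(* colored interval partitions ((C_1..C_q), w(1)..w(q)) of ([|u|], u),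
   given as (list of restricted words u|C_k, colouring w) *)
Definition cips (u : word) : seq (seq word * word) :=
  [seq (bl, w) | bl <- splits u, w <- colorings (size bl)].

Variable A : pzRingType.

(* a tuple of series F = (F^1..F^N) is given by its coefficients F i u = f_u^i *)
Definition series := 'I_N -> word -> A.

Definition in_Gdif (F : series) : Prop :=
  forall i (u : word), (size u <= 1)%N -> F i u = (u == [:: i])%:R.

Definition id_series : series := fun i u => (u == [:: i])%:R.

Definition subst (F G : series) : series := fun i u =>
  \sum_(c <- cips u) F i c.2 * \prod_(p <- zip c.2 c.1) G p.1 p.2.

(* generator Y_u^i is the pair (i,u); a monomial is a list of generators
   (the product in that order); an element is a formal Z-combination of
   monomials.  Generators Y_j^i with |j| = 1 are kept unreduced; they stand
   for delta_ij 1, which is how the pairing evaluates them. *)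
Definition gen := ('I_N * word)%type.
Definition monom := seq gen.
Definition H := seq (int * monom).

Definition Hone : H := [:: (1%:Z, [::])].
Definition Y (i : 'I_N) (u : word) : H := [:: (1%:Z, [:: (i, u)])].
Definition Hopp (x : H) : H := [seq (- m.1, m.2) | m <- x].
Definition Hmul (x y : H) : H :=
  [seq (m.1 * n.1, m.2 ++ n.2) | m <- x, n <- y].
Definition Hprod (xs : seq H) : H := foldr Hmul Hone xs.

Definition pairing (x : H) (F : series) : A :=
  \sum_(m <- x) (\prod_(g <- m.2) F g.1 g.2) *~ m.1.

(* antipode S_H on generators, determined by m (S (x) id) Delta = eta eps:
   S(Y_u^i) = - sum over colored interval partitions ((C_1..C_q),v) with
   q >= 2 of S(Y_{u|C_1}^{v(1)} ... Y_{u|C_q}^{v(q)}) Y_v^i,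
   where S is an anti-homomorphism; S(Y_j^i) = Y_j^i (= delta_ij 1).
   The fuel argument is set to |u|, which suffices. *)
Fixpoint Sgen (fuel : nat) (i : 'I_N) (u : word) : H :=
  match fuel with
  | 0 => Y i u
  | fuel'.+1 =>
      if (size u <= 1)%N then Y i u
      else Hopp (flatten
        [seq Hmul (Hprod (rev [seq Sgen fuel' p.1 p.2 | p <- zip c.2 c.1]))
                  (Y i c.2)
        | c <- cips u & (2 <= size c.1)%N])
  end.

Definition S_gen (g : gen) : H := Sgen (size g.2) g.1 g.2.

Definition S_H (x : H) : H :=
  flatten [seq Hmul [:: (m.1, [::])] (Hprod (rev (map S_gen m.2))) | m <- x].

Definition s_map (x : H) : H :=
  [seq (m.1, rev [seq (g.1, rev g.2) | g <- m.2]) | m <- x].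
Definition t_map (x : H) : H := [seq (m.1, rev m.2) | m <- x].

Definition S_L (x : H) : H := s_map (S_H (s_map x)).
Definition S_R (x : H) : H := t_map (S_H (t_map x)).

Definition left_inv (F : series) : series := fun j v =>
  if (2 <= size v)%N then pairing (S_L (Y j v)) F else (v == [:: j])%:R.
Definition right_inv (F : series) : series := fun j v =>
  if (2 <= size v)%N then pairing (S_R (Y j v)) F else (v == [:: j])%:R.

End Lagrange.

(* Main.v *)
Require Import Defs.
From mathcomp Require Import all_boot all_order all_algebra.
Set Implicit Arguments. Unset Strict Implicit. Unset Printing Implicit Defensive.

Section Comb.
Variable N : nat.
Implicit Types (u b : word N) (s bl C : seq (word N)).

Definition nonempty (s : seq (word N)) := all (fun b : word N => b != [::]) s.

Definition opts (x : 'I_N) (s : seq (word N)) : seq (seq (word N)) :=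
  match s with
  | [::] => [:: [:: [:: x]]]
  | b :: s' => [:: [:: x] :: b :: s'; (x :: b) :: s']
  end.

Lemma splits_cons x u : splits (x :: u) = flatten [seq opts x s | s <- splits u].
Proof. by []. Qed.

Lemma mem_splits u s : (s \in splits u) = (flatten s == u) && nonempty s.
Proof.
elim: u s => [|x u IH] s.
  by case: s => [|[|y b] s]; rewrite ?in_cons ?orbF ?eqxx ?andbF.
apply/idP/idP.
  move=> H0; move: H0; rewrite ?splits_cons => /flatten_mapP [s0]; rewrite IH => /andP [/eqP <- ne].
  case: s0 ne => [|b s0] ne; first by rewrite inE => /eqP -> /=; rewrite eqxx.
  rewrite !inE => /orP [] /eqP -> /=; first by rewrite eqxx.
  by rewrite eqxx /=; move: ne => /= /andP [_ ->].
case: s => [|b s] //=; case: b => [|y b] //=; rewrite ?andbF //.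
move=> /andP [/eqP [-> hu] ne].
change ((x :: b) :: s \in flatten [seq opts x s0 | s0 <- splits u]).
apply/flatten_mapP.
case: b hu => [|z b] /= hu.
  exists s; first by rewrite IH -hu eqxx ne.
  by case: s ne {hu} => [|b' s] //= ne; rewrite !inE eqxx.
exists ((z :: b) :: s); first by rewrite IH -hu eqxx /= ne.
by rewrite /= !inE eqxx orbT.
Qed.

Definition unopt (t : seq (word N)) : seq (word N) :=
  match t with
  | [::] => [::]
  | b :: r => if behead b is [::] then r else behead b :: r
  end.

Lemma unopt_opts x s t : nonempty s -> t \in opts x s -> unopt t = s.
Proof.
case: s => [|b s] /=; first by rewrite inE => _ /eqP ->.
move=> /andP [bn _]; rewrite !inE => /orP [] /eqP -> //=.
by case: b bn.
Qed.

Lemma uniq_opts x s : uniq (opts x s).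
Proof.
case: s => [|b s] //=; rewrite inE andbT; apply/eqP => -[].
by move=> <- /(congr1 size) /= /eqP; rewrite -addn1 addnC -{2}[size s]add0n eqn_add2r.
Qed.

Lemma uniq_splits u : uniq (splits u).
Proof.
elim: u => [|x u IH] //.
change (uniq (flatten [seq opts x s | s <- splits u])).
have: all nonempty (splits u) by apply/allP => s; rewrite mem_splits => /andP [].
elim: (splits u) IH => [|s0 ss IHs] //= /andP [nin un] /andP [ne0 ne].
rewrite cat_uniq uniq_opts IHs // andbT.
apply/hasP => -[t /flatten_mapP [s1 s1in tin] tin'].
have e1 := unopt_opts ne0 tin'.
have e2 := unopt_opts (allP ne _ s1in) tin.
by move: nin; rewrite -e1 e2 s1in.
Qed.

Lemma mem_colorings q (w : word N) : (w \in colorings N q) = (size w == q).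
Proof.
elim: q w => [|q IH] [|c w]; rewrite ?inE //=.
  by apply/allpairsP => -[[a b] [_ _ /=]].
apply/allpairsP; rewrite eqSS -IH.
case E: (w \in colorings N q).
  by exists (c, w); rewrite /= mem_ord_enum E.
by move=> [[c' w'] [_ /= h [_ e]]]; rewrite e h in E.
Qed.

Lemma uniq_colorings q : uniq (colorings N q).
Proof.
elim: q => [|q IH] //=.
apply: allpairs_uniq => //; first exact: ord_enum_uniq.
by move=> [a b] [c d] _ _ /= [-> ->].
Qed.

Lemma mem_cips u (c : seq (word N) * word N) :
  (c \in cips u) = [&& flatten c.1 == u, nonempty c.1 & size c.2 == size c.1].
Proof.
case: c => bl w /=; apply/allpairsPdep/idP.
  by move=> [bl' [w' [h1 h2 [-> ->]]]]; move: h1; rewrite mem_splits -mem_colorings => /andP [-> ->].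
move=> /and3P [h1 h2 h3]; exists bl, w; split => //.
  by rewrite mem_splits h1.
by rewrite mem_colorings.
Qed.

Lemma uniq_cips u : uniq (cips u).
Proof.
apply: allpairs_uniq_dep; first exact: uniq_splits.
  by move=> s _; apply: uniq_colorings.
by move=> [a b] [c d] _ _ /= [-> ->].
Qed.


Lemma cips_nil : cips ([::] : word N) = [:: ([::], [::])].
Proof. by []. Qed.

Lemma size_flatten_ne bl : nonempty bl -> size bl <= size (flatten bl).
Proof.
elim: bl => //= b bl IH /andP [bn ne]; rewrite size_cat.
case: b bn => // y b _ /=.
by rewrite addSn ltnS (leq_trans (IH ne)) // leq_addl.
Qed.

Lemma sing_eq bl : nonempty bl -> size (flatten bl) <= size bl ->
  bl = map (fun x => [:: x]) (flatten bl).
Proof.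
elim: bl => //= b bl IH /andP [bn ne]; case: b bn => // y [|z b] _ /=.
  by rewrite ltnS => h; congr cons; apply: IH.
rewrite !ltnS size_cat => h.
have h2 := leq_ltn_trans (leq_addl _ _) h.
by move: (leq_ltn_trans (size_flatten_ne ne) h2); rewrite ltnn.
Qed.

Lemma size_mem_flatten bl b : b \in bl -> size b <= size (flatten bl).
Proof.
elim: bl => //= b0 bl IH; rewrite inE size_cat => /orP [/eqP ->|/IH h].
  exact: leq_addr.
exact: leq_trans h (leq_addl _ _).
Qed.

Lemma block_lt bl b : nonempty bl -> 1 < size bl -> b \in bl -> size b < size (flatten bl).
Proof.
case: bl => //= b0 bl /andP [b0n ne] hs; rewrite inE size_cat => /orP [/eqP ->|h].
  rewrite -[X in X < _]addn0 ltn_add2l; apply: (leq_trans _ (size_flatten_ne ne)).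
  by case: bl hs {ne}.
case: b0 b0n => // y b0 _ /=; rewrite addSn ltnS.
exact: leq_trans (size_mem_flatten h) (leq_addl _ _).
Qed.

Lemma one_block bl u : flatten bl = u -> size bl = 1%N -> bl = [:: u].
Proof. by case: bl => [|b [|]] //= ; rewrite cats0 => ->. Qed.

Definition sing (u : word N) : seq (word N) := map (fun x => [:: x]) u.

Lemma sing_in_cips u : (sing u, u) \in cips u.
Proof. by rewrite mem_cips /sing flatten_seq1 size_map !eqxx andbT /=; apply/allP => b /mapP [x _ ->]. Qed.

Lemma single_in_cips u i : u != [::] -> ([:: u], [:: i]) \in cips u.
Proof. by move=> un; rewrite mem_cips /= cats0 eqxx un. Qed.

Lemma cips_sizes u c : c \in cips u -> size c.2 = size c.1 /\ size c.1 <= size u.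
Proof.
rewrite mem_cips => /and3P [/eqP <- ne /eqP ->]; split => //.
exact: size_flatten_ne.
Qed.

Lemma cips_full u c : c \in cips u -> size u <= size c.1 -> c.1 = sing u.
Proof.
rewrite mem_cips => /and3P [/eqP <- ne _] h.
by rewrite /sing -sing_eq.
Qed.

Lemma cips_one u c : c \in cips u -> size c.1 = 1%N -> c.1 = [:: u].
Proof. by rewrite mem_cips => /and3P [/eqP h _ _]; apply: one_block. Qed.

Lemma cips_single_eq u i c : c \in cips u -> c.2 = [:: i] -> c = ([:: u], [:: i]).
Proof.
case: c => bl w hc /= hw; have [h1 _] := cips_sizes hc.
move: h1; rewrite /= hw => /esym h1; have := cips_one hc h1; rewrite /=; by move=> ->.
Qed.

Lemma cips_block_lt u c b : c \in cips u -> 1 < size c.1 -> b \in c.1 -> size b < size u.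
Proof. by rewrite mem_cips => /and3P [/eqP <- ne _]; apply: block_lt. Qed.

Definition choices (C : seq (word N)) : seq (seq (seq (word N) * word N)) :=
  foldr (fun b acc => [seq c :: r | c <- cips b, r <- acc]) [:: [::]] C.

Lemma choices_cons b C : choices (b :: C) = [seq c :: r | c <- cips b, r <- choices C].
Proof. by []. Qed.

Lemma mem_choices C r : (r \in choices C) = all2 (fun b c => c \in cips b) C r.
Proof.
elim: C r => [|b C IH] [|c r]; rewrite ?choices_cons ?inE //=.
  by apply/allpairsPdep => -[? [? [_ _]]].
apply/allpairsPdep/andP.
  by move=> [c' [r' [h1 h2 [-> ->]]]]; rewrite -IH.
by move=> [h1 h2]; exists c, r; rewrite IH.
Qed.

Lemma uniq_choices C : uniq (choices C).
Proof.
elim: C => [|b C IH] //; rewrite choices_cons.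
apply: allpairs_uniq_dep => //; first exact: uniq_cips.
by move=> [a b'] [c d] _ _ /= [-> ->].
Qed.

Definition gmap (p : (seq (word N) * word N) * seq (seq (word N) * word N)) :=
  ((flatten (map fst p.2), flatten (map snd p.2)), (map snd p.2, p.1.2)).

Definition Rlist u := [seq (c, r) | c <- cips u, r <- choices c.1].
Definition Llist u := [seq (c1, c2) | c1 <- cips u, c2 <- cips c1.2].

Lemma mem_Llist u p : (p \in Llist u) = (p.1 \in cips u) && (p.2 \in cips p.1.2).
Proof.
case: p => c1 c2; apply/allpairsPdep/andP => /=.
  by move=> [x [y [h1 h2 [-> ->]]]].
by move=> [h1 h2]; exists c1, c2.
Qed.

Lemma mem_Rlist u p : (p \in Rlist u) = (p.1 \in cips u) && (p.2 \in choices p.1.1).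
Proof.
case: p => c1 c2; apply/allpairsPdep/andP => /=.
  by move=> [x [y [h1 h2 [-> ->]]]].
by move=> [h1 h2]; exists c1, c2.
Qed.

Notation A2 C r := (all2 (fun b (c : seq (word N) * word N) => c \in cips b) C r).

Lemma choices_flat C r : A2 C r -> map (fun c => flatten c.1) r = C.
Proof.
elim: C r => [|b C IH] [|c r] //= /andP [hc /IH ->].
by move: hc; rewrite mem_cips => /and3P [/eqP -> _ _].
Qed.

Lemma choices_sz C r : A2 C r -> size r = size C.
Proof. by elim: C r => [|b C IH] [|c r] //= /andP [_ /IH ->]. Qed.

Lemma choices_size C r : A2 C r -> map (fun c => size c.2) r = map (fun c => size c.1) r.
Proof.
elim: C r => [|b C IH] [|c r] //= /andP [hc /IH ->].
by move: hc; rewrite mem_cips => /and3P [_ _ /eqP ->].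
Qed.

Lemma choices_ne C r : nonempty C -> A2 C r ->
  all (fun c => nonempty c.1) r && all (fun c => c.1 != [::]) r.
Proof.
elim: C r => [|b C IH] [|c r] //= /andP [bn ne] /andP [hc /(IH _ ne) /andP [-> ->]].
move: hc; rewrite mem_cips => /and3P [/eqP e -> _] /=.
rewrite !andbT; by move: bn; rewrite -e; case: (c.1).
Qed.

Lemma choices_ne2 C r : nonempty C -> A2 C r -> all (fun c => c.2 != [::]) r.
Proof.
elim: C r => [|b C IH] [|c r] //= /andP [bn ne] /andP [hc /(IH _ ne) ->].
move: hc; rewrite mem_cips => /and3P [/eqP e _ /eqP es] /=.
rewrite andbT -size_eq0 es size_eq0; by move: bn; rewrite -e; case: (c.1).
Qed.

Lemma nonempty_flatten (ss : seq (seq (word N))) :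
  nonempty (flatten ss) = all nonempty ss.
Proof. by elim: ss => //= s ss IH; rewrite -IH /nonempty all_cat. Qed.

Lemma flatten_flatten (ss : seq (seq (word N))) :
  flatten (flatten ss) = flatten (map flatten ss).
Proof. by elim: ss => //= s ss IH; rewrite flatten_cat IH. Qed.

Lemma gmap_in u p : p \in Rlist u -> gmap p \in Llist u.
Proof.
rewrite mem_Rlist mem_Llist; case: p => [[C w] r] /= /andP [hc].
rewrite mem_choices => hr.
move: (hc); rewrite mem_cips /= => /and3P [/eqP hu hne /eqP hw].
have [/allP ne1 /allP ne2] := andP (choices_ne hne hr).
apply/andP; split; rewrite mem_cips /=.
  rewrite flatten_flatten -map_comp.
  rewrite (choices_flat hr) hu eqxx /=.
  rewrite nonempty_flatten /=; apply/andP; split.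
    by apply/allP => x /mapP [c cin ->]; apply: ne1.
  rewrite !size_flatten /shape -!map_comp.
  by have := choices_size hr => /= ->.
rewrite eqxx /= hw size_map (choices_sz hr) eqxx andbT.
apply/allP => x /mapP [c cin ->].
exact: (allP (choices_ne2 hne hr)).
Qed.

Lemma gmap_inj u : {in Rlist u &, injective gmap}.
Proof.
move=> [[C w] r] [[C' w'] r']; rewrite !mem_Rlist /= !mem_choices.
move=> /andP [hc hr] /andP [hc' hr'] [] e1 e2 e3 e4.
have hs : forall C r, A2 C r -> map fst r = reshape (shape (map snd r)) (flatten (map fst r)).
  move=> C0 r0 h0; rewrite -{1}(flattenK (map fst r0)); congr reshape.
  by rewrite /shape -!map_comp; have := choices_size h0.
have ef : map fst r = map fst r' by rewrite (hs _ _ hr) (hs _ _ hr') e1 e3.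
have er : r = r' by rewrite -(zip_unzip r) -(zip_unzip r'); congr zip.
subst r'; rewrite e4 -(choices_flat hr) -(choices_flat hr').
by [].
Qed.

Lemma A2_zip (D : seq (seq (word N))) (x : seq (word N)) :
  shape D = shape x -> all nonempty D -> A2 (map flatten D) (zip D x).
Proof.
elim: D x => [|Dk D IH] [|xk x] //= [e1 e2] /andP [h1 h2].
by rewrite IH // andbT mem_cips /= eqxx h1 e1 eqxx.
Qed.

Lemma gmap_surj u q : q \in Llist u -> exists2 p, p \in Rlist u & q = gmap p.
Proof.
case: q => [[d y] [x w]]; rewrite mem_Llist /= !mem_cips /=.
move=> /andP [/and3P [/eqP hd hdn /eqP hy] /and3P [/eqP hx hxn /eqP hw]].
set sh := shape x; set D := reshape sh d.
have hsum : sumn sh = size d by rewrite -size_flatten hx hy.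
have fD : flatten D = d by rewrite reshapeKr // hsum.
have shD : shape D = sh by rewrite reshapeKl // hsum.
have szD : size D = size x by rewrite size_reshape /sh size_map.
have allD : all nonempty D by rewrite -nonempty_flatten fD.
exists ((map flatten D, w), zip D x).
  rewrite mem_Rlist /= mem_choices A2_zip // andbT mem_cips /=.
  rewrite -flatten_flatten fD hd eqxx /= size_map szD hw eqxx andbT.
  apply/allP => b /mapP [Dk Dkin ->].
  have : size Dk \in shape D by apply: map_f.
  rewrite shD => /mapP [xk xkin exk].
  have xkn : xk != [::] := allP hxn xk xkin.
  have Dkn := allP allD Dk Dkin.
  move: xkn; rewrite -size_eq0 -exk size_eq0.
  by case: Dk Dkn {Dkin exk} => // b0 Dk /= /andP [b0n _] _; case: b0 b0n.
have e1 : map fst (zip D x) = D by apply: unzip1_zip; rewrite szD.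
have e2 : map snd (zip D x) = x by apply: unzip2_zip; rewrite szD.
by rewrite /gmap /= e1 e2 fD hx.
Qed.

Lemma uniq_Rlist u : uniq (Rlist u).
Proof.
apply: allpairs_uniq_dep; first exact: uniq_cips.
  by move=> c _; apply: uniq_choices.
by move=> [a b] [c d] _ _ /= [-> ->].
Qed.

Lemma uniq_Llist u : uniq (Llist u).
Proof.
apply: allpairs_uniq_dep; first exact: uniq_cips.
  by move=> c _; apply: uniq_cips.
by move=> [a b] [c d] _ _ /= [-> ->].
Qed.

Lemma reindex_perm u : perm_eq (map gmap (Rlist u)) (Llist u).
Proof.
apply: uniq_perm.
- by rewrite map_inj_in_uniq ?uniq_Rlist //; apply: gmap_inj.
- exact: uniq_Llist.
move=> q; apply/mapP/idP.
  by move=> [p pin ->]; apply: gmap_in.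
by move=> /gmap_surj [p pin ->]; exists p.
Qed.

Definition revc (c : seq (word N) * word N) := (rev (map (@rev _) c.1), rev c.2).

Lemma revcK : involutive revc.
Proof. by move=> [bl w]; rewrite /revc /= revK map_rev revK -map_comp (eq_map (@revK _)) map_id. Qed.

Lemma mem_revc u c : (revc c \in cips (rev u)) = (c \in cips u).
Proof.
case: c => bl w; rewrite !mem_cips /= -rev_flatten (inj_eq (can_inj (@revK _))).
rewrite !size_rev size_map; congr [&& _, _ & _].
rewrite /nonempty all_rev all_map; apply: eq_all => b /=.
by rewrite -!size_eq0 size_rev.
Qed.

Lemma cips_rev u : perm_eq (cips (rev u)) (map revc (cips u)).
Proof.
apply: uniq_perm; first exact: uniq_cips.
  by rewrite map_inj_uniq ?uniq_cips //; apply: can_inj revcK.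
move=> c; rewrite -{1}(revcK c) mem_revc -{2}(revcK c) mem_map //.
exact: can_inj revcK.
Qed.

End Comb.

Section Ring.
Variable N : nat.
Variable A : pzRingType.
Import GRing.Theory.
Local Open Scope ring_scope.
Implicit Types (K s F G : series N A) (u w : word N).

Lemma sum_ind (T : eqType) (r : seq T) (a : T) (F : T -> A) :
  uniq r -> a \in r -> \sum_(x <- r) F x *+ (x == a) = F a.
Proof.
move=> ur ar; rewrite (bigD1_seq a) //= eqxx mulr1n big1 ?addr0 //.
by move=> x /negbTE ->.
Qed.

Lemma Gdif0 K i : in_Gdif K -> K i [::] = 0.
Proof. by move=> h; rewrite h. Qed.

Lemma Gdif1 K i x : in_Gdif K -> K i [:: x] = (x == i)%:R.
Proof. by move=> h; rewrite h // eqseq_cons andbT. Qed.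

Lemma sum_cips1 x (Phi : seq (word N) * word N -> A) :
  \sum_(c <- cips [:: x]) Phi c = \sum_(j <- ord_enum N) Phi ([:: [:: x]], [:: j]).
Proof.
rewrite /cips /= cats0 big_map flatten_map1 big_map.
by [].
Qed.

Lemma prod_sing K u y : in_Gdif K -> size y = size u ->
  \prod_(p <- zip y (sing u)) K p.1 p.2 = (y == u)%:R.
Proof.
move=> GK; elim: u y => [|x u IH] [|a y] //=; first by rewrite big_nil.
move=> [hs]; rewrite big_cons /= IH // Gdif1 // eqseq_cons -natrM mulnb eq_sym; congr (_ %:R); congr andb; by apply/eqP/eqP.
Qed.

Lemma prod_delta u c : c \in cips u ->
  \prod_(p <- zip c.2 c.1) ((p.2 == [:: p.1])%:R : A) = (c == (sing u, u))%:R.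
Proof.
case: c => C w; rewrite mem_cips /= => /and3P [/eqP hu _ /eqP hw].
have -> : \prod_(p <- zip w C) ((p.2 == [:: p.1])%:R : A) = (C == sing w)%:R.
  elim: C w hw {hu} => [|b C IH] [|a w] //= => [_|[hs]]; first by rewrite big_nil.
  by rewrite big_cons /= IH // eqseq_cons -natrM mulnb.
rewrite xpair_eqE; have -> : (C == sing w) = (C == sing u) && (w == u); last by [].
subst u; apply/eqP/andP => [e|[/eqP e1 /eqP e2]].
  by rewrite e /sing flatten_seq1; split; apply: eqxx.
by rewrite e2.
Qed.

Lemma nested K s (HL : forall i u, subst K s i u = id_series A i u) C w :
  size w = size C ->
  \sum_(r <- choices C)
     (\prod_(p <- rev (zip w (map snd r))) K p.1 p.2) *
     (\prod_(p <- zip (flatten (map snd r)) (flatten (map fst r))) s p.1 p.2)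
  = \prod_(p <- zip w C) (p.2 == [:: p.1])%:R.
Proof.
elim: C w => [|b C IH] [|w1 w] // => [_|[hs]].
  by rewrite big_seq1 /= !big_nil mulr1.
rewrite choices_cons big_allpairs_dep /= big_cons /=.
transitivity (\sum_(c <- cips b) \sum_(r <- choices C)
   (\prod_(p <- rev (zip w (map snd r))) K p.1 p.2) * (K w1 c.2 *
     \prod_(p <- zip c.2 c.1) s p.1 p.2) *
   (\prod_(p <- zip (flatten (map snd r)) (flatten (map fst r))) s p.1 p.2)).
  apply: eq_big_seq => c cin; apply: eq_bigr => r _.
  have [hc _] := cips_sizes cin.
  rewrite rev_cons big_rcons zip_cat // big_cat /= !mulrA.
  by [].
rewrite exchange_big /=.
transitivity (\sum_(r <- choices C)
   (\prod_(p <- rev (zip w (map snd r))) K p.1 p.2) * (b == [:: w1])%:R *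
   (\prod_(p <- zip (flatten (map snd r)) (flatten (map fst r))) s p.1 p.2)).
  apply: eq_bigr => r _; rewrite -big_distrl -big_distrr /=; congr (_ * _ * _).
  by have := HL w1 b; rewrite /subst /id_series.
rewrite -IH // big_distrr /=; apply: eq_bigr => r _.
by rewrite mulr_natr mulr_natl mulrnAl.
Qed.

Lemma core K s : in_Gdif K -> in_Gdif s ->
  (forall i u, subst K s i u = id_series A i u) ->
  forall i u, \sum_(c <- cips u) s i c.2 * \prod_(p <- rev (zip c.2 c.1)) K p.1 p.2
              = (u == [:: i])%:R.
Proof.
move=> GK Gs HL i u.
have [n] := ubnP (size u); elim: n u i => // n IHn u i hu.
case: u hu => [|x [|y u']] hu.
- by rewrite cips_nil big_seq1 /= Gdif0 // mul0r.
- rewrite sum_cips1 eqseq_cons andbT.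
  under eq_bigr => j _ do rewrite /= big_seq1 /= Gdif1 // Gdif1 // mulr_natl.
  by rewrite sum_ind ?ord_enum_uniq ?mem_ord_enum.
set u0 := x :: y :: u'.
pose Phi := fun (c1 c2 : seq (word N) * word N) =>
  s i c2.2 * (\prod_(p <- rev (zip c2.2 c2.1)) K p.1 p.2) * (\prod_(p <- zip c1.2 c1.1) s p.1 p.2).
pose E := fun i u => \sum_(c <- cips u) s i c.2 * \prod_(p <- rev (zip c.2 c.1)) K p.1 p.2.
have H1 : \sum_(c1 <- cips u0) \sum_(c2 <- cips c1.2) Phi c1 c2 = E i u0 + s i u0.
  transitivity (\sum_(c1 <- cips u0) (E i u0 *+ (c1 == (sing u0, u0)) + s i u0 *+ (c1 == ([:: u0], [:: i])))).
    apply: eq_big_seq => c1 c1in; rewrite /Phi -big_distrl -/(E i c1.2).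
    have [hs12 hsz] := cips_sizes c1in.
    case: (ltnP (size c1.1) (size u0)) => hlt.
      rewrite [E i c1.2]IHn; last by rewrite hs12 (leq_trans hlt).
      have -> : (c1 == (sing u0, u0)) = false.
        by apply/eqP => e; move: hlt; rewrite e /= /sing size_map ltnn.
      rewrite mulr0n add0r.
      case: (eqVneq c1.2 [:: i]) => h2.
        by rewrite (cips_single_eq c1in h2) !eqxx mulr1n big_seq1 /= mul1r.
      have -> : (c1 == ([:: u0], [:: i])) = false by apply/eqP => e; move: h2; rewrite e eqxx.
      by rewrite /= mul0r mulr0n.
    have e1 := cips_full c1in hlt.
    have -> : (c1 == ([:: u0], [:: i])) = false.
      by apply/eqP => e; move: e1; rewrite e /sing => /(congr1 size); rewrite /= size_map.
    rewrite mulr0n addr0 e1 prod_sing //; last by rewrite hs12 e1 /sing size_map.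
    have -> : (c1 == (sing u0, u0)) = (c1.2 == u0).
      by case: c1 {c1in hs12 hsz hlt} e1 => C w /= ->; rewrite xpair_eqE eqxx.
    by case: eqP => [->|_]; rewrite /= ?mulr1 ?mulr0.
  rewrite big_split (sum_ind (fun _ => E i u0)) ?uniq_cips ?sing_in_cips //.
  have hsum : \sum_(c <- cips u0) s i u0 *+ (c == ([:: u0], [:: i])) = s i u0.
    by apply: sum_ind; [apply: uniq_cips | apply: single_in_cips].
  by rewrite hsum.
have H2 : \sum_(c1 <- cips u0) \sum_(c2 <- cips c1.2) Phi c1 c2 = s i u0.
  transitivity (\sum_(p <- Llist u0) Phi p.1 p.2); first by rewrite /Llist [RHS]big_allpairs_dep.
  rewrite -(perm_big _ (reindex_perm u0)) big_map /Rlist big_allpairs_dep /=.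
  transitivity (\sum_(c <- cips u0) s i c.2 *+ (c == (sing u0, u0))).
    apply: eq_big_seq => c cin; rewrite /Phi /gmap /=.
    under eq_bigr => r _ do rewrite -mulrA.
    have [hs12 _] := cips_sizes cin.
    by rewrite -big_distrr /= nested // (prod_delta cin) mulr_natr.
  by rewrite sum_ind ?uniq_cips ?sing_in_cips.
change (E i u0 = (u0 == [:: i])%:R).
move: H2; rewrite H1 => /(canRL (addrK _)); rewrite subrr => ->.
by rewrite /u0 eqseq_cons andbF.
Qed.

End Ring.

Section Conn.
Variable N : nat.
Variable A : pzRingType.
Import GRing.Theory.
Local Open Scope ring_scope.
Implicit Types (K F G : series N A) (u w : word N) (X Y : H N).

Definition rho F X := pairing (t_map X) F.

Lemma rho_cat F X Y : rho F (X ++ Y) = rho F X + rho F Y.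
Proof. by rewrite /rho /pairing /t_map map_cat big_cat. Qed.

Lemma rho_nil F : rho F [::] = 0.
Proof. by rewrite /rho /pairing big_nil. Qed.

Lemma rho_flatten F (L : seq (H N)) : rho F (flatten L) = \sum_(x <- L) rho F x.
Proof.
elim: L => [|x L IH]; first by rewrite big_nil rho_nil.
by rewrite /= rho_cat IH big_cons.
Qed.

Lemma rho_opp F X : rho F (Hopp X) = - rho F X.
Proof.
rewrite /rho /pairing /t_map /Hopp -map_comp big_map -sumrN big_map.
by apply: eq_bigr => m _ /=; rewrite mulrNz.
Qed.

Lemma rho_mul F X Y : rho F (Hmul X Y) = rho F Y * rho F X.
Proof.
rewrite /rho /pairing /t_map /Hmul !big_map big_allpairs_dep /= exchange_big /= big_distrl /=.
apply: eq_bigr => b _; rewrite big_distrr /=; apply: eq_bigr => a _ /=.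
by rewrite rev_cat big_cat mulrzA mulrzAl mulrzAr.
Qed.

Lemma rho_one F : rho F (Hone N) = 1.
Proof. by rewrite /rho /pairing big_seq1 /= big_nil mulr1z. Qed.

Lemma rho_Y F i u : rho F (Y i u) = F i u.
Proof. by rewrite /rho /pairing big_seq1 /= big_seq1 mulr1z. Qed.

Lemma rho_prod F (L : seq (H N)) : rho F (Hprod L) = \prod_(x <- rev L) rho F x.
Proof.
elim: L => [|x L IH]; first by rewrite big_nil rho_one.
by rewrite /= rho_mul IH rev_cons big_rcons.
Qed.

Lemma mem_zip2 (S T : eqType) (s : seq S) (t : seq T) (p : S * T) : p \in zip s t -> p.2 \in t.
Proof.
elim: s t => [|a s IH] [|b t] //= => /orP [/eqP -> /=|/IH h]; apply/orP.
  by left.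
by right.
Qed.

Lemma Sgen_fuel n : forall m i u, (size u <= n)%N -> (n <= m)%N -> Sgen m i u = Sgen n i u.
Proof.
elim: n => [|n IH] m i u hu hm.
  by case: m hm => [|m] _ //=; rewrite (leq_trans hu).
case: m hm => [|m] // hm /=.
case: ifP => // _; congr Hopp; congr flatten.
apply/eq_in_map => c; rewrite mem_filter => /andP [h2 cin].
congr Hmul; congr Hprod; congr rev.
apply/eq_in_map => p pin; apply: IH => //.
rewrite -ltnS; apply: leq_trans hu.
exact: cips_block_lt cin h2 (mem_zip2 pin).
Qed.

Definition V F i u := rho F (S_gen (i, u)).

Lemma V_small F i u : in_Gdif F -> (size u <= 1)%N -> V F i u = (u == [:: i])%:R.
Proof.
move=> GF hu; rewrite /V /S_gen /=.
have -> : Sgen (size u) i u = Y i u.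
  by case: (size u) => [|k] //=; rewrite hu.
by rewrite rho_Y GF.
Qed.

Lemma V_rec F i u : (1 < size u)%N ->
  V F i u = - \sum_(c <- cips u | (1 < size c.1)%N)
                F i c.2 * \prod_(p <- zip c.2 c.1) V F p.1 p.2.
Proof.
move=> hu; rewrite /V /S_gen /=.
case E: (size u) hu => [|k] // hk.
rewrite /= ifN; last by rewrite E -ltnNge.
rewrite rho_opp rho_flatten big_map big_filter; congr (- _).
rewrite big_seq_cond [RHS]big_seq_cond; apply: eq_bigr => c /andP [cin h2].
rewrite rho_mul rho_Y rho_prod revK big_map; congr (_ * _).
apply: eq_big_seq => p pin; congr rho; apply: Sgen_fuel => //.
rewrite -ltnS -E; exact: cips_block_lt cin h2 (mem_zip2 pin).
Qed.

End Conn.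

Section Final.
Variable N : nat.
Variable A : pzRingType.
Import GRing.Theory.
Local Open Scope ring_scope.
Implicit Types (K F G X Y : series N A) (u w : word N).

Definition Fstar F : series N A := fun i u => F i (rev u).

Lemma pairing_s F (Z : H N) : pairing (s_map Z) F = rho (Fstar F) Z.
Proof.
rewrite /rho /pairing /s_map /t_map !big_map; apply: eq_bigr => m _ /=.
by rewrite -map_rev big_map.
Qed.

Lemma rho_SH F j v : rho F (S_H (Y j v)) = V F j v.
Proof.
by rewrite /S_H /= cats0 !rho_mul !rho_one mul1r mulr1.
Qed.

Lemma right_inv_V F : in_Gdif F -> forall j v, right_inv F j v = V F j v.
Proof.
move=> GF j v; rewrite /right_inv; case: ifP => h.
  by rewrite /S_R -/(rho F _) rho_SH.
by rewrite V_small // leqNgt; move: h => /negbT; rewrite -ltnNge.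
Qed.

Lemma left_inv_V F : in_Gdif F -> forall j v, left_inv F j v = V (Fstar F) j (rev v).
Proof.
move=> GF j v; rewrite /left_inv; case: ifP => h.
  by rewrite /S_L pairing_s rho_SH.
have hv : (size v <= 1)%N by rewrite leqNgt; move: h => /negbT.
rewrite V_small ?size_rev //.
  by case: v hv {h} => [|x [|]].
move=> i u hu; rewrite /Fstar GF ?size_rev //.
by case: u hu => [|x [|]].
Qed.

Lemma Gdif_star F : in_Gdif F -> in_Gdif (Fstar F).
Proof. by move=> GF i u hu; rewrite /Fstar GF ?size_rev //; case: u hu => [|x [|]]. Qed.

Lemma Gdif_V F : in_Gdif F -> in_Gdif (V F).
Proof. by move=> GF i u hu; rewrite V_small. Qed.

Lemma subst_decR F X i u : in_Gdif F -> u != [::] ->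
  subst F X i u = X i u + \sum_(c <- cips u | (1 < size c.1)%N)
                             F i c.2 * \prod_(p <- zip c.2 c.1) X p.1 p.2.
Proof.
move=> GF un; rewrite /subst (bigID (fun c => (1 < size c.1)%N)) /= addrC; congr (_ + _).
rewrite big_mkcond /=.
transitivity (\sum_(c <- cips u) X i u *+ (c == ([:: u], [:: i]))); last first.
  by apply: sum_ind; [apply: uniq_cips | apply: single_in_cips].
apply: eq_big_seq => c cin; have [hs hsz] := cips_sizes cin.
case: ltnP => h /=.
  have -> : (c == ([:: u], [:: i])) = false by apply/eqP => e; move: h; rewrite e.
  by [].
have h1 : size c.1 = 1%N.
  apply/eqP; rewrite eqn_leq h /= lt0n size_eq0; apply/eqP => e0.
  move: (cin); rewrite mem_cips e0 => /and3P [/eqP e _ _].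
  by move: un; rewrite -e.
have e1 := cips_one cin h1.
case: c cin hs e1 {hsz h h1} => C w /= cin hs e1; subst C.
case: w hs cin => [|j [|]] // _ cin.
rewrite big_seq1 /= Gdif1 // xpair_eqE eqxx /= eqseq_cons andbT mulr_natl.
by case: eqP => [->|].
Qed.

Lemma subst_decL X F i u : in_Gdif F ->
  subst X F i u = X i u + \sum_(c <- cips u | (size c.1 < size u)%N)
                             X i c.2 * \prod_(p <- zip c.2 c.1) F p.1 p.2.
Proof.
move=> GF; rewrite /subst (bigID (fun c => (size c.1 < size u)%N)) /= addrC; congr (_ + _).
rewrite big_mkcond /=.
transitivity (\sum_(c <- cips u) X i u *+ (c == (sing u, u))); last first.
  by apply: sum_ind; [apply: uniq_cips | apply: sing_in_cips].
apply: eq_big_seq => c cin; have [hs hsz] := cips_sizes cin.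
case: ltnP => h /=.
  have -> : (c == (sing u, u)) = false.
    by apply/eqP => e; move: h; rewrite e /sing size_map ltnn.
  by [].
have e1 := cips_full cin h.
rewrite e1 prod_sing //; last by rewrite hs e1 /sing size_map.
have -> : (c == (sing u, u)) = (c.2 == u).
  by case: c {cin hs hsz h} e1 => C w /= ->; rewrite xpair_eqE eqxx.
by case: eqP => [->|_]; rewrite ?mulr1 ?mulr0.
Qed.

Lemma rinv_ok F : in_Gdif F -> forall i u, subst F (V F) i u = id_series A i u.
Proof.
move=> GF i u; case: (eqVneq u [::]) => [->|un].
  by rewrite /subst cips_nil big_seq1 /= Gdif0 // mul0r.
rewrite subst_decR //.
case: (leqP (size u) 1) => hu.
  rewrite big1_seq ?addr0 ?V_small //.
  move=> c /andP [h cin]; have [_ hsz] := cips_sizes cin.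
  by move: (leq_ltn_trans hu h); rewrite ltnNge hsz.
rewrite V_rec // addNr /id_series.
by case: u hu {un} => [|x [|y u]] // _; rewrite eqseq_cons andbF.
Qed.

Lemma rinv_uniq F X Y : in_Gdif F -> in_Gdif X -> in_Gdif Y ->
  (forall i u, subst F X i u = id_series A i u) ->
  (forall i u, subst F Y i u = id_series A i u) ->
  forall i u, X i u = Y i u.
Proof.
move=> GF GX GY hX hY i u.
have [n] := ubnP (size u); elim: n u i => // n IHn u i hu.
case: (leqP (size u) 1) => h1; first by rewrite GX // GY.
have un : u != [::] by case: u h1 {hu}.
have := hX i u; rewrite subst_decR // => /(canRL (addrK _)) ->.
have := hY i u; rewrite subst_decR // => /(canRL (addrK _)) ->.
congr (_ - _); rewrite big_seq_cond [RHS]big_seq_cond; apply: eq_bigr => c /andP [cin h2].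
congr (_ * _); apply: eq_big_seq => p pin; apply: IHn.
exact: leq_trans (cips_block_lt cin h2 (mem_zip2 pin)) hu.
Qed.

Lemma linv_uniq F X Y : in_Gdif F ->
  (forall i u, subst X F i u = id_series A i u) ->
  (forall i u, subst Y F i u = id_series A i u) ->
  forall i u, X i u = Y i u.
Proof.
move=> GF hX hY i u.
have [n] := ubnP (size u); elim: n u i => // n IHn u i hu.
have := hX i u; rewrite subst_decL // => /(canRL (addrK _)) ->.
have := hY i u; rewrite subst_decL // => /(canRL (addrK _)) ->.
congr (_ - _); rewrite big_seq_cond [RHS]big_seq_cond; apply: eq_bigr => c /andP [cin h2].
congr (_ * _); apply: IHn; have [-> _] := cips_sizes cin.
exact: leq_trans h2 hu.
Qed.

Lemma zip_mapr (S T : Type) (f : T -> T) (s : seq S) (t : seq T) :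
  zip s (map f t) = map (fun p => (p.1, f p.2)) (zip s t).
Proof. by elim: s t => [|a s IH] [|b t] //=; rewrite IH. Qed.

Lemma linv_ok F : in_Gdif F -> forall i u, subst (left_inv F) F i u = id_series A i u.
Proof.
move=> GF i u.
have GS := Gdif_star GF.
have hc := core GS (Gdif_V GS) (rinv_ok GS) i (rev u).
have -> : id_series A i u = ((rev u) == [:: i])%:R.
  rewrite /id_series; congr (nat_of_bool _)%:R.
  by apply/eqP/eqP => h; [rewrite h | rewrite -(revK u) h].
rewrite -hc /subst.
have hp := cips_rev (rev u); rewrite revK in hp.
rewrite (perm_big _ hp) big_map; apply: eq_big_seq => c cin.
have [hs _] := cips_sizes cin.
rewrite left_inv_V // /revc /= revK -rev_zip ?size_rev ?size_map //.
by rewrite zip_mapr -map_rev big_map.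
Qed.

End Final.

Unset Implicit Arguments.

Theorem theorem11 (N : nat) (A : pzRingType) (F : series N A) :
  in_Gdif F ->
  ((forall i u, subst (left_inv F) F i u = id_series A i u) /\
   (forall G : series N A, in_Gdif G ->
      (forall i u, subst G F i u = id_series A i u) ->
      forall i u, G i u = left_inv F i u)) /\
  ((forall i u, subst F (right_inv F) i u = id_series A i u) /\
   (forall Hs : series N A, in_Gdif Hs ->
      (forall i u, subst F Hs i u = id_series A i u) ->
      forall i u, Hs i u = right_inv F i u)).
Proof.
move=> GF.
have hR : forall i u, subst F (right_inv F) i u = id_series A i u.
  move=> i u; rewrite -(rinv_ok GF i u) /subst; apply: eq_bigr => c _.
  by apply: (congr1 (GRing.mul (F i c.2))); apply: eq_bigr => p _; rewrite right_inv_V.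
have GR : in_Gdif (right_inv F).
  move=> i u hu; rewrite /right_inv ifN //; by rewrite -ltnNge ltnS.
split; split.
- exact: linv_ok.
- move=> G _ hG; exact: linv_uniq GF hG (linv_ok GF).
- exact: hR.
- move=> Hs GH hH; exact: rinv_uniq GF GH GR hH hR.
Qed.
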